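(* For every integer $k\ge 1$, $k$ is a local minimum of the negligibility sequence $(p(m))_{m\ge 0}$ if and only if $k$ is a local minimum of the rank sequence $(r(m))_{m\ge0}$.
   Context: Every integer $m\ge 0$ is written in binary as $m=\sum_{k\ge1} m_k 2^{k-1}$ with $m_k\in\{0,1\}$. The rank is $r(m)=\sum_k m_k$ and the negligibility is $p(m)=\sum_k (k+1)m_k$. For a real sequence $(a_m)_{m\ge0}$, an index $k\ge1$ is a local minimum if $a_{k-1}>a_k<a_{k+1}$ (strict inequalities). *)

(* Defs.v *)
From mathcomp Require Import all_boot.
Set Implicit Arguments. Unset Strict Implicit. Unset Printing Implicit Defensive.

(* k-th binary digit of m, 1-indexed: m = \sum_{k>=1} m_k 2^(k-1). *)
Definition digit (m k : nat) : nat := odd (m %/ 2 ^ k.-1).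

(* All digits m_k with k > m vanish since m < 2^m, so the sums over k >= 1
   are the finite sums over 1 <= k <= m. *)
Definition rank (m : nat) : nat := \sum_(1 <= k < m.+1) digit m k.
Definition negl (m : nat) : nat := \sum_(1 <= k < m.+1) k.+1 * digit m k.

Definition local_min (a : nat -> nat) (k : nat) : Prop :=
  1 <= k /\ a k.-1 > a k /\ a k < a k.+1.

(* Main.v *)
Require Import Defs.
From mathcomp Require Import all_boot.
From mathcomp Require Import zify.

Definition T (w : nat -> nat) (m N : nat) := \sum_(1 <= k < N.+1) w k * digit m k.

Lemma digit_big m k : m < k -> digit m k = 0.
Proof.
move=> mk; rewrite /digit divn_small //.
apply: (leq_trans (ltn_expl m (isT : 1 < 2))); rewrite leq_exp2l //; lia.
Qed.

Lemma T_indep w m N : m <= N -> T w m N = T w m m.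
Proof.
move=> mN; rewrite /T (@big_cat_nat _ _ _ m.+1) //=; try lia.
rewrite [X in _ + X]big_nat_cond [X in _ + X]big1 ?addn0 // => k /andP[/andP[Hk _] _].
by rewrite digit_big ?muln0.
Qed.

Lemma digit_shift n (b : bool) k : digit (n.*2 + b) k.+2 = digit n k.+1.
Proof.
rewrite /digit /= expnS divnMA.
have -> : (n.*2 + b) %/ 2 = n.
  by rewrite -muln2 divnMDl // divn_small ?addn0 //; case: b.
by [].
Qed.

Lemma digit_one n (b : bool) : digit (n.*2 + b) 1 = b.
Proof. by rewrite /digit expn0 divn1 oddD odd_double; case: b. Qed.

Lemma T_shift w n (b : bool) N :
  T w (n.*2 + b) N.+1 = w 1 * b + T (fun k => w k.+1) n N.
Proof.
rewrite /T big_nat_recl // digit_one; congr (_ + _).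
apply: eq_big_nat => k /andP[Hk _].
by case: k Hk => // k _; rewrite digit_shift.
Qed.

Lemma rankT m : rank m = T (fun _ => 1) m m.
Proof. by rewrite /rank /T; apply: eq_bigr => k _; rewrite mul1n. Qed.

Lemma neglT m : negl m = T (fun k => k.+1) m m.
Proof. by []. Qed.

Lemma T_split n :
  T (fun k => k.+2) n n = negl n + rank n.
Proof.
rewrite neglT rankT /T -big_split /=; apply: eq_bigr => k _.
by rewrite -mulnDl addn1.
Qed.

Lemma rank_rec n (b : bool) : rank (n.*2 + b) = rank n + b.
Proof.
rewrite rankT -(@T_indep _ _ (n.*2+b).+1) // T_shift mul1n.
rewrite T_indep; last by case: b; lia.
by rewrite -rankT addnC.
Qed.

Lemma negl_rec n (b : bool) : negl (n.*2 + b) = negl n + rank n + 2 * b.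
Proof.
rewrite neglT -(@T_indep _ _ (n.*2+b).+1) // T_shift.
rewrite T_indep; last by case: b; lia.
by rewrite T_split addnC.
Qed.

Lemma rank_even n : rank n.*2 = rank n.
Proof. by have := rank_rec n false; rewrite addn0 addn0. Qed.
Lemma rank_odd n : rank n.*2.+1 = (rank n).+1.
Proof. by have := rank_rec n true; rewrite addn1 addn1. Qed.
Lemma negl_even n : negl n.*2 = negl n + rank n.
Proof. by have := negl_rec n false; rewrite !addn0. Qed.
Lemma negl_odd n : negl n.*2.+1 = negl n + rank n + 2.
Proof. by have := negl_rec n true; rewrite addn1. Qed.

Lemma rank0 : rank 0 = 0.
Proof. by rewrite /rank big_geq. Qed.
Lemma negl0 : negl 0 = 0.
Proof. by rewrite /negl big_geq. Qed.

Lemma parity m : exists n, m = n.*2 \/ m = n.*2.+1.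
Proof.
exists m./2; rewrite -[m in m = _ \/ _]odd_double_half -[m in _ \/ m = _]odd_double_half.
by case: (odd m); [right|left].
Qed.

Lemma rank_le m : rank m.+1 <= (rank m).+1.
Proof.
elim: m {-2}m (leqnn m) => [|N IH] m Hm.
  by move: Hm; rewrite leqn0 => /eqP ->; have /= -> := rank_odd 0.
have [n [Em|Em]] := parity m; subst m.
  by rewrite rank_odd rank_even.
rewrite -doubleS rank_even rank_odd; apply: leqW; apply: IH; lia.
Qed.

Lemma negl_le m c :
  negl m.+1 + c * rank m.+1 <= negl m + c * rank m + c + 2.
Proof.
elim: m {-2}m (leqnn m) c => [|N IH] m Hm c.
  move: Hm; rewrite leqn0 => /eqP ->; have /= -> := rank_odd 0; have /= -> := negl_odd 0; rewrite rank0 negl0; lia.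
have [n [Em|Em]] := parity m; subst m.
  rewrite rank_odd rank_even negl_odd negl_even; lia.
rewrite -doubleS rank_even rank_odd negl_even negl_odd.
have := IH n ltac:(lia) c.+1; lia.
Qed.

Ltac simp := do 3 rewrite ?negl_odd ?negl_even ?rank_odd ?rank_even.

Theorem theorem2 (k : nat) : 1 <= k ->
  (local_min negl k <-> local_min rank k).
Proof.
move=> Hk; rewrite /local_min.
have [n [Ek|Ek]] := parity k; have [q [En|En]] := parity n; subst n k.
{ case: q Hk => [|p] Hk; first by [].
  have E1 : (p.+1).*2.*2.-1 = (p.*2.+1).*2.+1 by rewrite -!muln2; lia.
  rewrite E1; simp.
  have := rank_le p; have := negl_le p 2; simp; lia. }
{ have E1 : (q.*2.+1).*2.-1 = (q.*2).*2.+1 by rewrite -!muln2; lia.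
  rewrite E1; simp; lia. }
{ have E1 : (q.*2).*2.+1.-1 = (q.*2).*2 by [].
  have E2 : (q.*2).*2.+2 = (q.*2.+1).*2 by rewrite -!muln2; lia.
  rewrite E1 E2; simp; lia. }
{ have E1 : (q.*2.+1).*2.+1.-1 = (q.*2.+1).*2 by [].
  have E2 : (q.*2.+1).*2.+2 = (q.+1).*2.*2 by rewrite -!muln2; lia.
  rewrite E1 E2; simp.
  have := rank_le q; have := negl_le q 2; lia. }
Qed.
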